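(* Let $p$ be a prime, $q=p^m$, $1\le r<p$, and enumerate $\mathbb{F}_q^*=\{\alpha_1,\dots,\alpha_{q-1}\}$. Let $\mathcal{G}=(\mathbb{F}_q[T]/(T^{r+1}))^*/\mathbb{F}_q^*$; every non-identity element has order $p$, so $\mathcal{G}$ is an $\mathbb{F}_p$-vector space of dimension $rm$. For $I=\{i_1,\dots,i_t\}\subseteq\{1,\dots,q-1\}$, the subgroup ($\mathbb{F}_p$-subspace) of $\mathcal{G}$ generated by the classes of $1+\alpha_iT$, $i\in I$, has $\mathbb{F}_p$-dimension $rm$ if and only if the matrix $$G_I=\begin{pmatrix}\alpha_{i_1}&\cdots&\alpha_{i_t}\\ \alpha_{i_1}^2&\cdots&\alpha_{i_t}^2\\ \vdots&&\vdots\\ \alpha_{i_1}^r&\cdots&\alpha_{i_t}^r\end{pmatrix}\in\mathbb{F}_p^{rm\times t}$$ has rank $rm$ over $\mathbb{F}_p$, where each entry $\alpha_i^k$ is replaced by its coordinate column vector in $\mathbb{F}_p^m$ with respect to a fixed $\mathbb{F}_p$-basis of $\mathbb{F}_q$.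
   Context: $T$ is an indeterminate over $\mathbb{F}_q$; $\mathbb{F}_q^*$ denotes the image of the nonzero constants in $(\mathbb{F}_q[T]/(T^{r+1}))^*$. *)

(* Defs.v *)
From HB Require Import structures.
From mathcomp Require Import all_boot all_algebra all_fingroup.
Set Implicit Arguments. Unset Strict Implicit. Unset Printing Implicit Defensive.
Import GRing.Theory.
Local Open Scope ring_scope.

Definition truncmod (F : finFieldType) (r : nat) : {poly F} := 'X^(r.+1).

Definition truncring (F : finFieldType) (r : nat) := {poly %/ (truncmod F r)}.
HB.instance Definition _ F r := GRing.ComUnitRing.on (truncring F r).
HB.instance Definition _ F r := Finite.on (truncring F r).

Definition tclass (F : finFieldType) (r : nat) (P : {poly F}) : truncring F r :=
  in_qpoly (truncmod F r) P.

Definition const_units (F : finFieldType) (r : nat) : {set {unit truncring F r}} :=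
  [set u | [exists c : F, val u == tclass r c%:P]].

Definition Ggroup (F : finFieldType) (r : nat) := coset_of (const_units F r).

Definition gen_subgroup (F : finFieldType) (r : nat) (n : nat)
    (a : 'I_n -> F) (I : {set 'I_n}) : {group Ggroup F r} :=
  <<[set coset (const_units F r) u | u : {unit truncring F r} &
          [exists i in I, val u == tclass r (1 + (a i)%:P * 'X)]]>>%G.

Definition expand (p : nat) (F : finFieldType) (m : nat) (b : 'I_m -> F)
    (c : 'rV['F_p]_m) : F :=
  \sum_(j < m) (nat_of_ord (c 0 j))%:R * b j.

(* j-th entry of a row vector (0 if out of range). *)
Definition rv_nth (K : nzRingType) (m : nat) (v : 'rV[K]_m) (j : nat) : K :=
  if insub j is Some j' then v 0 j' else 0.

(* The matrix G_I in F_p^{rm x t}: the row block k (k = 1..r) consists of the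
   coordinate columns of a_{i_s}^k, i.e. row (k-1)*m + j, column s holds the
   j-th coordinate of a_{i_s}^k; columns are indexed by the elements of I
   (enumerated in increasing order). *)
Definition GI_matrix (p : nat) (F : finFieldType) (m r n : nat)
    (coord : F -> 'rV['F_p]_m) (a : 'I_n -> F) (I : {set 'I_n})
    : 'M['F_p]_(r * m, #|I|) :=
  \matrix_(i < r * m, s < #|I|)
     rv_nth (coord (a (enum_val s) ^+ (i %/ m).+1)) (i %% m).

(* Main.v *)
Require Import Defs.
From HB Require Import structures.
From mathcomp Require Import all_boot all_algebra all_fingroup zify ring mxabelem.
Set Implicit Arguments. Unset Strict Implicit. Unset Printing Implicit Defensive.
Import GRing.Theory FinRing.Theory.
Local Open Scope group_scope.
Local Open Scope ring_scope.
Section Low.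
Variable R : comNzRingType.
Definition eqlow n (P Q : {poly R}) := forall k, (k < n)%N -> P`_k = Q`_k.

Lemma eqlow_refl n P : eqlow n P P. Proof. by []. Qed.
Lemma eqlow_sym n P Q : eqlow n P Q -> eqlow n Q P.
Proof. by move=> h k hk; rewrite h. Qed.
Lemma eqlow_trans n P Q S : eqlow n P Q -> eqlow n Q S -> eqlow n P S.
Proof. by move=> h1 h2 k hk; rewrite h1 ?h2. Qed.
Lemma eqlowW n n' P Q : (n <= n')%N -> eqlow n' P Q -> eqlow n P Q.
Proof. by move=> hn h k hk; rewrite h // (leq_trans hk hn). Qed.
Lemma eqlowD n P P' Q Q' : eqlow n P P' -> eqlow n Q Q' -> eqlow n (P + Q) (P' + Q').
Proof. by move=> h1 h2 k hk; rewrite !coefD h1 ?h2. Qed.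
Lemma eqlowM n P P' Q Q' : eqlow n P P' -> eqlow n Q Q' -> eqlow n (P * Q) (P' * Q').
Proof.
move=> h1 h2 k hk; rewrite !coefM; apply: eq_bigr => i _.
have := ltn_ord i; move=> hi0; have hi : (i < n)%N by lia.
have hi2 : (k - i < n)%N by lia.
by rewrite h1 // h2.
Qed.
Lemma eqlow_deriv n P Q : eqlow n.+1 P Q -> eqlow n P^`() Q^`().
Proof. by move=> h k hk; rewrite !coef_deriv h. Qed.
Lemma eqlow_rmodp n P : eqlow n (Pdiv.Ring.rmodp P ('X^n)) P.
Proof.
move=> k hk; rewrite {2}(Pdiv.RingMonic.rdivp_eq (monicXn R n) P) coefD coefMXn hk add0r.
by [].
Qed.
End Low.
Section Ring.
Variables (F : finFieldType) (r : nat).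
Local Notation R := (truncring F r).
Definition pol (x : R) : {poly F} := val x.

Lemma mkmon : mk_monic (truncmod F r) = 'X^(r.+1).
Proof. exact: mk_monic_Xn. Qed.

Lemma pol_mul x y : eqlow r.+1 (pol (x * y)) (pol x * pol y).
Proof.
have := @eqlow_rmodp _ r.+1 (pol x * pol y); rewrite -mkmon; exact.
Qed.

Lemma pol1 : pol 1 = 1.
Proof. exact: (qpolyCE _ 1). Qed.

Lemma size_pol x : (size (pol x) <= r.+1)%N.
Proof.
have h : (size (pol x) < size (mk_monic (truncmod F r)))%N := size_mk_monic x.
by rewrite mkmon size_polyXn in h.
Qed.

Lemma pol_tclass (P : {poly F}) : (size P <= r.+1)%N -> pol (tclass r P) = P.
Proof.
move=> hP; apply: in_qpoly_small; by rewrite mkmon size_polyXn.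
Qed.

Lemma pol_inj : injective pol.
Proof. exact: val_inj. Qed.

Local Notation U := {unit truncring F r}.
Definition Ap (u : U) := pol (val u).
Definition Aip (u : U) := pol (val (u^-1)%g).
Definition Dp (u : U) := (Ap u)^`() * Aip u.

Lemma AAi u : eqlow r.+1 (Ap u * Aip u) 1.
Proof.
apply: eqlow_trans (eqlow_sym (pol_mul _ _)) _.
by rewrite /= mulrV ?pol1 //; apply: (valP u).
Qed.

Lemma DpM u w : eqlow r (Dp (u * w)%g) (Dp u + Dp w).
Proof.
have h1 : eqlow r.+1 (Ap (u * w)%g) (Ap u * Ap w) by rewrite /Ap val_unitM; exact: pol_mul.
have h2 : eqlow r.+1 (Aip (u * w)%g) (Aip w * Aip u).
  by rewrite /Aip invMg val_unitM; exact: pol_mul.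
apply: (@eqlow_trans _ _ _ ((Ap u * Ap w)^`() * (Aip w * Aip u))).
  apply: eqlowM; first exact: eqlow_deriv.
  exact: eqlowW h2.
have -> : (Ap u * Ap w)^`() * (Aip w * Aip u) =
   (Ap u)^`() * Aip u * (Ap w * Aip w) + (Ap w)^`() * Aip w * (Ap u * Aip u).
  by rewrite derivM; ring.
rewrite /Dp -[X in eqlow _ _ (X + _)]mulr1 -[X in eqlow _ _ (_ + X)]mulr1.
apply: eqlowD; apply: eqlowM => //; exact: eqlowW (AAi _).
Qed.

Lemma Dp_ker (p : nat) u : prime p -> p \in [pchar F] -> (r < p)%N ->
  eqlow r (Dp u) 0 -> val u = tclass r ((Ap u)`_0)%:P.
Proof.
move=> pp pF rp hD.
have hA : eqlow r (Ap u)^`() 0.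
  apply: (@eqlow_trans _ _ _ (Dp u * Ap u)).
    have -> : Dp u * Ap u = (Ap u)^`() * (Ap u * Aip u) by rewrite /Dp; ring.
    rewrite -[X in eqlow _ X _]mulr1; apply: eqlowM => //.
    exact: eqlow_sym (eqlowW (leqnSn _) (AAi _)).
  by rewrite -(mul0r (Ap u)); apply: eqlowM.
apply: pol_inj; rewrite pol_tclass ?size_polyC; last by case: (_ != 0).
apply/polyP => i; rewrite coefC; case: i => [|k] //=.
have [kr|kr] := ltnP k r.
  have := hA k kr; rewrite coef_deriv coef0 => /eqP.
  rewrite -mulr_natr mulf_eq0 => /orP[/eqP //|].
  rewrite -(dvdn_pcharf pF) => /(dvdn_leq (ltn0Sn _)) hp; exfalso; lia.
apply: nth_default; have hs := size_pol (val u); apply: leq_trans hs _; exact: kr.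
Qed.

Lemma Dp_const u c : val u = tclass r c%:P -> Dp u = 0.
Proof.
move=> h; rewrite /Dp /Ap h pol_tclass ?size_polyC; last by case: (_ != 0).
by rewrite derivC mul0r.
Qed.

Lemma size_gen2 (a : F) : (size ((1 + a%:P * 'X)%R : {poly F}) <= 2)%N.
Proof.
apply: leq_trans (size_add _ _) _; rewrite size_polyC oner_eq0 geq_max /=.
by apply: leq_trans (size_mul_leq _ _) _; rewrite size_polyX size_polyC; case: (a != 0).
Qed.

Lemma gen_unit (a : F) : (1 <= r)%N -> tclass r (1 + a%:P * 'X) \is a GRing.unit.
Proof.
move=> r1; rewrite qualifE /= mkmon coprimep_expl // coprimep_sym coprimepX.
rewrite Pdiv.Ring.rmodp_small; last by rewrite size_polyXn; apply: leq_ltn_trans (size_gen2 a) _; lia.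
by rewrite rootE !hornerE oner_eq0.
Qed.

Lemma Dp_gen u (a : F) : (1 <= r)%N -> val u = tclass r (1 + a%:P * 'X) ->
  forall k, (k < r)%N -> (Dp u)`_k = a * (- a) ^+ k.
Proof.
move=> r1 h.
have hsz : (size ((1 + a%:P * 'X)%R : {poly F}) <= r.+1)%N.
  exact: leq_trans (size_gen2 a) _.
have hA : Ap u = 1 + a%:P * 'X by rewrite /Ap h pol_tclass.
have hAi : forall k, (k <= r)%N -> (Aip u)`_k = (- a) ^+ k.
  have hh : forall k, (k < r.+1)%N ->
      (Aip u)`_k + a * (if k == 0%N then 0 else (Aip u)`_k.-1) = (k == 0%N)%:R.
    move=> k hk; have := @AAi u k hk; rewrite hA mulrDl mul1r -mulrA coefD coefCM coefXM.
    by rewrite coef1.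
  elim=> [|k IH] hk.
    by have := hh 0%N (ltn0Sn _); rewrite /= mulr0 addr0 expr0.
  have := hh k.+1 hk; rewrite /= IH ?(ltnW hk) // => /eqP; rewrite addr_eq0 => /eqP ->.
  by rewrite exprS mulNr.
move=> k hk; rewrite /Dp hA derivD derivC add0r derivM derivC mul0r add0r derivX mulr1 coefCM hAi ?(ltnW hk) //.
Qed.
End Ring.
Section Psi.
Variables (p m r : nat) (F : finFieldType) (b : 'I_m -> F) (coord : F -> 'rV['F_p]_m).
Hypotheses (pp : prime p) (pF : p \in [pchar F]) (r1 : (1 <= r)%N) (rp : (r < p)%N).
Hypotheses (cK : cancel coord (expand b)) (eK : cancel (expand b) coord).

Lemma natr_modp n : ((n %% p)%:R : F) = n%:R.
Proof.
by rewrite {2}(divn_eq n p) natrD natrM (pcharf0 pF) mulr0 add0r.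
Qed.

Lemma expandD (c d : 'rV['F_p]_m) : expand b (c + d) = expand b c + expand b d.
Proof.
rewrite /expand -big_split /=; apply: eq_bigr => j _.
rewrite -mulrDl -natrD mxE /=.
move: (nat_of_ord (c 0%R j) + nat_of_ord (d 0%R j))%N => n.
by rewrite (Fp_cast pp) natr_modp.
Qed.

Lemma expand0 : expand b (0 : 'rV['F_p]_m) = 0.
Proof. by rewrite /expand big1 // => j _; rewrite mxE mul0r. Qed.

Lemma coordD x y : coord (x + y) = coord x + coord y.
Proof. by rewrite -{1}(cK x) -{1}(cK y) -expandD eK. Qed.

Lemma coord0 : coord 0 = 0.
Proof. by rewrite -expand0 eK. Qed.

Lemma coord_eq0 x : coord x = 0 -> x = 0.
Proof. by move=> h; rewrite -(cK x) h expand0. Qed.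

Lemma rv_nthD n (v w : 'rV['F_p]_n) j : rv_nth (v + w) j = rv_nth v j + rv_nth w j.
Proof. by rewrite /rv_nth; case: insub => [j'|]; rewrite ?mxE ?addr0. Qed.

Lemma rv_nth0 n j : rv_nth (0 : 'rV['F_p]_n) j = 0.
Proof. by rewrite /rv_nth; case: insub => [j'|]; rewrite ?mxE. Qed.

Local Notation U := {unit truncring F r}.

Definition psi (u : U) : 'rV['F_p]_(r * m) :=
  \row_(i < r * m) rv_nth (coord ((-1) ^+ (i %/ m) * (Dp u)`_(i %/ m))) (i %% m).

Lemma divm_lt (i : 'I_(r * m)) : (i %/ m < r)%N.
Proof.
have hi : (nat_of_ord i < r * m)%N := ltn_ord i.
move: (nat_of_ord i) hi => k hi.
have hm : (0 < m)%N by move: hi; case: (posnP m) => [->|//]; rewrite muln0.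
by rewrite ltn_divLR.
Qed.

Lemma psiM u w : psi (u * w)%g = psi u + psi w.
Proof.
apply/rowP => i; rewrite !mxE -rv_nthD -coordD -mulrDr -coefD.
by rewrite (DpM u w (divm_lt i)).
Qed.

Lemma psi_const u c : val u = tclass r c%:P -> psi u = 0.
Proof.
move=> h; apply/rowP => i; rewrite !mxE (Dp_const h) coef0 mulr0 coord0.
by rewrite rv_nth0.
Qed.

Lemma psi_ker u : psi u = 0 -> u \in const_units F r.
Proof.
move=> h; rewrite inE; apply/existsP; exists ((Ap u)`_0); apply/eqP.
apply: (Dp_ker pp pF rp) => k hk; rewrite coef0.
have hc : coord ((-1) ^+ k * (Dp u)`_k) = 0.
  apply/rowP => j; rewrite mxE.
  have hi : (k * m + j < r * m)%N.
    have := ltn_ord j; move=> hj; nia.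
  have := congr1 (fun v : 'rV['F_p]_(r * m) => v 0 (Ordinal hi)) h; rewrite !mxE.
  have -> : ((k * m + j) %/ m = k)%N.
    have hm : (0 < m)%N := leq_ltn_trans (leq0n _) (ltn_ord j).
    by rewrite divnMDl // divn_small ?addn0.
  have -> : ((k * m + j) %% m = j)%N.
    by rewrite modnMDl modn_small.
  rewrite /rv_nth (insubT (fun x => x < m)%N (ltn_ord j)) /= => hh; rewrite -hh; congr (coord _ 0 _); exact: val_inj.
have := coord_eq0 hc => /eqP; rewrite mulf_eq0 signr_eq0 /= => /eqP //.
Qed.

Lemma psi_gen (n : nat) (alpha : 'I_n -> F) (I : {set 'I_n}) u (s : 'I_#|I|) :
  val u = tclass r (1 + (alpha (enum_val s))%:P * 'X) ->
  psi u = row s (GI_matrix r coord alpha I)^T.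
Proof.
move=> h; apply/rowP => i; rewrite !mxE (Dp_gen r1 h (divm_lt i)).
congr (rv_nth (coord _) _).
set a := alpha _; set k := (i %/ m)%N.
have e : (-1) ^+ k * (-1) ^+ k = 1 :> F by rewrite -exprMn mulrNN mulr1 expr1n.
rewrite (exprNn a k) exprS.
transitivity (((-1) ^+ k * (-1) ^+ k) * (a * a ^+ k)); first ring.
by rewrite e mul1r.
Qed.

Lemma normK (u : U) : u \in 'N(const_units F r).
Proof.
apply: (subsetP (cent_sub _)); apply/centP => y _.
by apply: val_inj; rewrite !val_unitM mulrC.
Qed.

Lemma psi1 : psi 1%g = 0.
Proof.
have h := psiM 1%g 1%g; rewrite mulg1 in h.
by move/(congr1 (fun v => v - psi 1%g)): h; rewrite subrr addrK => /esym.
Qed.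

Lemma psiV u : psi (u^-1)%g = - psi u.
Proof.
have := psiM u (u^-1)%g; rewrite mulgV psi1 => /esym/eqP.
by rewrite addrC addr_eq0 => /eqP.
Qed.

Lemma psi_prod n (c : 'I_n -> U) : psi (\prod_(i < n) c i)%g = \sum_(i < n) psi (c i).
Proof. exact: (big_morph psi psiM psi1). Qed.

Lemma mem_genK u : (u \in <<const_units F r>>) = (psi u == 0).
Proof.
apply/idP/eqP.
  move/gen_prodgP => [n [c hc ->]]; rewrite psi_prod big1 // => i _.
  by move: (hc i); rewrite inE => /existsP[c0 /eqP h]; exact: psi_const h.
by move/psi_ker; exact: mem_gen.
Qed.

Lemma coset_eqE u w :
  (coset (const_units F r) u == coset (const_units F r) w) = (psi u == psi w).
Proof.
rewrite -val_eqE /= !val_coset_prim ?normK //.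
apply/eqP/idP => [h | h].
  have: u \in <<const_units F r>> :* w by rewrite -h rcoset_refl.
  by rewrite mem_rcoset mem_genK psiM psiV subr_eq0.
by apply/rcoset_eqP; rewrite mem_rcoset mem_genK psiM psiV subr_eq0.
Qed.

Definition psib (C : Ggroup F r) := psi (repr C).

Lemma psib_coset u : psib (coset (const_units F r) u) = psi u.
Proof. by apply/eqP; rewrite -coset_eqE coset_reprK. Qed.

Lemma psib_inj : injective psib.
Proof.
move=> C D h; rewrite -(coset_reprK C) -(coset_reprK D); apply/eqP.
by rewrite coset_eqE; apply/eqP; exact: h.
Qed.

Lemma psibM (C D : Ggroup F r) : psib (C * D)%g = psib C + psib D.
Proof.
rewrite -(coset_reprK C) -(coset_reprK D) -coset_morphM ?normK //.
by rewrite !psib_coset psiM.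
Qed.

Lemma psib1 : psib 1%g = 0.
Proof.
have h := psibM 1%g 1%g; rewrite mulg1 in h.
by move/(congr1 (fun v => v - psib 1%g)): h; rewrite subrr addrK => /esym.
Qed.

Lemma psibX (C : Ggroup F r) n : psib (C ^+ n)%g = psib C *+ n.
Proof.
elim: n => [|n IH]; first by rewrite expg0 psib1.
by rewrite expgS psibM IH mulrS.
Qed.

Lemma im_gen (n : nat) (alpha : 'I_n -> F) (I : {set 'I_n}) :
  psib @: (gen_subgroup r alpha I : {set Ggroup F r}) = rowg (GI_matrix r coord alpha I)^T.
Proof.
apply/setP => v; apply/imsetP/idP.
  case=> h hH ->; move: hH => /gen_prodgP [k [c hc ->]].
  rewrite (big_morph psib psibM psib1) inE; apply: summx_sub => i _.
  have := hc i; case/imsetP => u; rewrite inE => /existsP [j /andP [jI /eqP hu]] ->.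
  have hs : enum_val (enum_rank_in jI j) = j := enum_rankK_in jI jI.
  rewrite psib_coset (@psi_gen _ alpha I u (enum_rank_in jI j)) ?row_sub //.
  by rewrite hs.
rewrite inE => /submxP [D ->].
pose us (s : 'I_#|I|) : U := FinRing.Unit (gen_unit (alpha (enum_val s)) r1).
exists (\prod_(s < #|I|) coset (const_units F r) (us s) ^+ (D 0 s))%g.
  apply: group_prod => s _; apply: groupX; apply: mem_gen; apply/imsetP.
  exists (us s) => //; rewrite inE; apply/existsP; exists (enum_val s).
  by rewrite enum_valP /=.
rewrite (big_morph psib psibM psib1) mulmx_sum_row; apply: eq_bigr => s _.
rewrite psibX psib_coset (@psi_gen _ alpha I _ s) // -scaler_nat.
by rewrite natr_Zp.
Qed.

Lemma card_gen (n : nat) (alpha : 'I_n -> F) (I : {set 'I_n}) :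
  logn p #|gen_subgroup r alpha I| = \rank (GI_matrix r coord alpha I).
Proof.
rewrite -(card_imset _ psib_inj) im_gen card_rowg card_Fp // mxrank_tr.
exact: pfactorK.
Qed.
End Psi.

Local Close Scope group_scope.
Unset Implicit Arguments.

Theorem lemma4p1 (p m r : nat) (F : finFieldType)
    (b : 'I_m -> F) (coord : F -> 'rV['F_p]_m)
    (alpha : 'I_(p ^ m - 1) -> F) (I : {set 'I_(p ^ m - 1)}) :
  prime p -> p \in [pchar F] -> #|F| = (p ^ m)%N ->
  (1 <= r)%N -> (r < p)%N ->
  (* b is an F_p-basis of F, and coord gives coordinates w.r.t. b *)
  cancel coord (expand b) -> cancel (expand b) coord ->
  (* alpha enumerates F^* *)
  injective alpha -> (forall i, alpha i != 0) ->
  logn p #|gen_subgroup r alpha I| = (r * m)%N <->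
  \rank (GI_matrix r coord alpha I) = (r * m)%N.
Proof.
move=> pp pF _ r1 rp cK eK _ _.
by rewrite (card_gen pp pF r1 rp cK eK).
Qed.
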